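(* Let $G$ be a just infinite profinite group, and let $K$ and $L$ be normal subgroups of $G$ with $L < K$ such that $K/L$ is a chief factor of $G$. Then there is a critical pair $(A, A\cap L)$ in $G$ with $AL = K$. In particular $K/L \cong A/(A\cap L)$ and $C_G(K/L) = C_G(A/(A\cap L))$.
   Context: All groups are profinite, subgroups closed. A profinite group is \emph{just infinite} if it is infinite and every non-trivial closed normal subgroup has finite index. For normal subgroups $B<A$, $A/B$ is a \emph{chief factor} of $G$ if there is no normal subgroup of $G$ strictly between $B$ and $A$, and $(A,B)$ is a \emph{critical pair} if $B$ contains every normal subgroup of $G$ properly contained in $A$. $C_G(A/B) = \{g \in G: [g,a]\in B \ \forall a \in A\}$. *)

(* Defs.v *)
From Stdlib Require Import List.

Set Implicit Arguments.
Unset Strict Implicit.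

Definition set_of (T : Type) := T -> Prop.

Definition connected_in (T : Type) (op : set_of T -> Prop) (S : set_of T) :=
  ~ (exists U V : set_of T, op U /\ op V /\
       (forall x, S x -> U x \/ V x) /\
       (exists x, S x /\ U x) /\ (exists x, S x /\ V x) /\
       (forall x, S x -> U x -> V x -> False)).

Record profinite_group := ProfiniteGroup {
  pg_car :> Type;
  pg_mul : pg_car -> pg_car -> pg_car;
  pg_inv : pg_car -> pg_car;
  pg_one : pg_car;
  pg_mulA : forall x y z, pg_mul x (pg_mul y z) = pg_mul (pg_mul x y) z;
  pg_mul1g : forall x, pg_mul pg_one x = x;
  pg_mulVg : forall x, pg_mul (pg_inv x) x = pg_one;
  pg_open : set_of pg_car -> Prop;
  pg_open_setT : pg_open (fun _ => True);
  pg_open_setI : forall U V, pg_open U -> pg_open V ->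
                   pg_open (fun x => U x /\ V x);
  pg_open_bigU : forall (I : Type) (F : I -> set_of pg_car),
                   (forall i, pg_open (F i)) -> pg_open (fun x => exists i, F i x);
  pg_mul_cont : forall (U : set_of pg_car) x y, pg_open U -> U (pg_mul x y) ->
      exists V W, pg_open V /\ pg_open W /\ V x /\ W y /\
                  (forall v w, V v -> W w -> U (pg_mul v w));
  pg_inv_cont : forall U, pg_open U -> pg_open (fun x => U (pg_inv x));
  pg_hausdorff : forall x y, x <> y ->
      exists U V, pg_open U /\ pg_open V /\ U x /\ V y /\
                  (forall z, U z -> V z -> False);
  pg_compact : forall (I : Type) (F : I -> set_of pg_car),
      (forall i, pg_open (F i)) -> (forall x, exists i, F i x) ->
      exists l : list I, forall x, exists i, In i l /\ F i x;
  pg_totdisc : forall S : set_of pg_car, connected_in pg_open S ->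
      forall x y, S x -> S y -> x = y
}.

Arguments pg_mul {p} _ _.
Arguments pg_inv {p} _.
Arguments pg_one {p}.
Arguments pg_open {p} _.

Section Defs.
Variable G : profinite_group.
Implicit Types H K L A B : set_of G.

Definition is_closed H := pg_open (fun x => ~ H x).

Definition is_subgroup H :=
  H pg_one /\ (forall x y, H x -> H y -> H (pg_mul x y)) /\
  (forall x, H x -> H (pg_inv x)).

(* closed normal subgroup ("normal subgroup" in the paper: all subgroups are closed) *)
Definition closed_normal H :=
  is_closed H /\ is_subgroup H /\
  (forall g x, H x -> H (pg_mul (pg_inv g) (pg_mul x g))).

Definition subset H K := forall x, H x -> K x.
Definition proper_subset H K := subset H K /\ exists x, K x /\ ~ H x.
Definition setI H K : set_of G := fun x => H x /\ K x.
Definition setM H K : set_of G := fun x => exists h k, H h /\ K k /\ x = pg_mul h k.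
Definition set_eq H K := forall x, H x <-> K x.

Definition group_infinite := ~ exists l : list G, forall x : G, In x l.
Definition nontrivial H := exists x, H x /\ x <> pg_one.
Definition finite_index H :=
  exists l : list G, forall x, exists g, In g l /\ H (pg_mul (pg_inv g) x).

Definition just_infinite :=
  group_infinite /\
  forall N, closed_normal N -> nontrivial N -> finite_index N.

Definition chief_factor K L :=
  closed_normal K /\ closed_normal L /\ proper_subset L K /\
  ~ exists M, closed_normal M /\ proper_subset L M /\ proper_subset M K.

Definition critical_pair A B :=
  closed_normal A /\ closed_normal B /\ proper_subset B A /\
  forall N, closed_normal N -> proper_subset N A -> subset N B.

Definition commg (x y : G) : G :=
  pg_mul (pg_inv x) (pg_mul (pg_inv y) (pg_mul x y)).

Definition centraliser_factor A B : set_of G :=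
  fun g => forall a, A a -> B (commg g a).

(* abstract group isomorphism K1/L1 ~= K2/L2, given by a map f on coset
   representatives: well defined and injective, surjective, multiplicative *)
Definition factor_isomorphic K1 L1 K2 L2 :=
  exists f : G -> G,
    (forall x, K1 x -> K2 (f x)) /\
    (forall x y, K1 x -> K1 y ->
        (L1 (pg_mul x (pg_inv y)) <-> L2 (pg_mul (f x) (pg_inv (f y))))) /\
    (forall a, K2 a -> exists x, K1 x /\ L2 (pg_mul (f x) (pg_inv a))) /\
    (forall x y, K1 x -> K1 y ->
        L2 (pg_mul (f (pg_mul x y)) (pg_inv (pg_mul (f x) (f y))))).
End Defs.

(* Main.v *)
Require Import Defs.
From Stdlib Require Import List Classical ClassicalEpsilon FunctionalExtensionality PropExtensionality.

Section BW.
Variable X : Type.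
Variable le : X -> X -> Prop.
Hypothesis le_refl : forall x, le x x.
Hypothesis le_trans : forall x y z, le x y -> le y z -> le x z.
Hypothesis le_anti : forall x y, le x y -> le y x -> x = y.
Variable P : X -> Prop.
Variable f : X -> X.
Variable x0 : X.
Hypothesis Px0 : P x0.
Hypothesis Pf : forall x, P x -> P (f x).
Hypothesis lef : forall x, P x -> le x (f x).
Definition is_chain (C : X -> Prop) := forall a b, C a -> C b -> le a b \/ le b a.
Definition is_sup (C : X -> Prop) s :=
  (forall c, C c -> le c s) /\ (forall u, (forall c, C c -> le c u) -> le s u).
Hypothesis sup_ex : forall C, (forall c, C c -> P c) -> (exists c, C c) -> is_chain C ->
  exists s, P s /\ is_sup C s.

Definition tower (F : X -> Prop) := F x0 /\ (forall x, F x -> F (f x)) /\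
  (forall C s, (forall c, C c -> F c) -> (exists c, C c) -> is_chain C -> is_sup C s -> F s).
Definition T x := forall F, tower F -> F x.

Lemma T_tower : tower T.
Proof.
  split; [|split].
  - intros F HF; apply HF.
  - intros x Hx F HF. destruct HF as [H0 [H1 H2]]. apply H1. apply Hx. repeat split; auto.
  - intros C s HC Hne Hch Hs F HF. destruct HF as [H0 [H1 H2]]. apply (H2 C s); auto.
    intros c Hc. apply HC; auto. repeat split; auto.
Qed.

Lemma T_ind : forall F : X -> Prop, tower (fun x => T x /\ F x) -> forall x, T x -> F x.
Proof. intros F HT x Hx. apply (Hx _ HT). Qed.

Lemma P_tower : tower P.
Proof.
  split; [exact Px0|split; [exact Pf|]].
  intros C s HC Hne Hch Hs. destruct (@sup_ex C HC Hne Hch) as [s' [Ps' Hs']].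
  assert (s = s') as E.
  { apply le_anti. apply (proj2 Hs). apply (proj1 Hs'). apply (proj2 Hs'). apply (proj1 Hs). }
  subst; auto.
Qed.

Lemma TP : forall x, T x -> P x.
Proof. intros x Hx; apply Hx, P_tower. Qed.

Lemma x0_least : forall x, T x -> le x0 x.
Proof.
  apply T_ind. destruct T_tower as [A [B C]]. split; [|split].
  - split; auto.
  - intros x [Tx Hx]. split; auto. apply le_trans with x; auto. apply lef, TP; auto.
  - intros C0 s HC Hne Hch Hs. split.
    + apply (C C0 s); auto. intros c Hc; apply HC; auto.
    + destruct Hne as [c Hc]. apply le_trans with c. apply (HC c Hc). apply (proj1 Hs); auto.
Qed.

Definition extreme c := forall x, T x -> le x c -> x <> c -> le (f x) c.

Lemma lemA : forall c, T c -> extreme c -> forall x, T x -> le x c \/ le (f c) x.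
Proof.
  intros c Tc Ec. apply T_ind. destruct T_tower as [A [B C]]. split; [|split].
  - split; auto. left; apply x0_least; auto.
  - intros x [Tx Hx]. split; auto. destruct Hx as [Hxc|Hfx].
    + destruct (classic (x = c)) as [E|NE]. subst; right; apply le_refl. left; apply Ec; auto.
    + right. apply le_trans with x; auto. apply lef, TP; auto.
  - intros C0 s HC Hne Hch Hs. split.
    + apply (C C0 s); auto. intros c0 Hc; apply HC; auto.
    + destruct (classic (exists x, C0 x /\ le (f c) x)) as [[x [Cx Hx]]|Hno].
      * right. apply le_trans with x; auto. apply (proj1 Hs); auto.
      * left. apply (proj2 Hs). intros c' Cc'. destruct (proj2 (HC c' Cc')) as [H|H]; auto.
        exfalso; apply Hno; eauto.
Qed.

Lemma lemB : forall c, T c -> extreme c.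
Proof.
  apply T_ind. destruct T_tower as [A [B C]]. split; [|split].
  - split; auto. intros x Tx Hle Hne. exfalso; apply Hne; apply le_anti; auto. apply x0_least; auto.
  - intros c [Tc Ec]. split; auto. intros x Tx Hle Hne2.
    destruct (lemA c Tc Ec x Tx) as [Hxc|Hfx].
    + destruct (classic (x = c)) as [E|NE].
      * subst. apply le_refl.
      * apply le_trans with c; [apply Ec; auto | apply lef; apply TP; auto].
    + exfalso; apply Hne2; apply le_anti; auto.
  - intros C0 s HC Hne Hch Hs.
    assert (Ts : T s). { apply (C C0 s); auto. intros c Hc; apply HC; auto. }
    split; auto. intros x Tx Hle Hne2.
    destruct (classic (exists c, C0 c /\ ~ le (f c) x)) as [[c [Cc Hc]] | Hall].
    + destruct (HC c Cc) as [Tc Ec]. destruct (lemA c Tc Ec x Tx) as [Hxc|Hfx]; [|contradiction].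
      destruct (classic (x = c)) as [E|NE].
      * subst x. destruct (lemA c Tc Ec s Ts) as [Hsc|Hfs]; auto.
        exfalso; apply Hne2; apply le_anti; auto.
      * apply le_trans with c; [apply Ec; auto | apply (proj1 Hs); auto].
    + exfalso. apply Hne2. apply le_anti; auto. apply (proj2 Hs). intros c Cc.
      apply le_trans with (f c). apply lef, TP, (proj1 (HC c Cc)).
      apply NNPP; intro H; apply Hall; eauto.
Qed.

Lemma T_chain : is_chain T.
Proof.
  intros a b Ta Tb. destruct (lemA b Tb (lemB b Tb) a Ta) as [H|H]; auto.
  right. apply le_trans with (f b); auto. apply lef, TP; auto.
Qed.

Theorem BW : exists m, P m /\ f m = m.
Proof.
  destruct T_tower as [A [B C]].
  destruct (@sup_ex T TP (ex_intro _ x0 A) T_chain) as [m [Pm Hm]].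
  assert (Tm : T m) by (apply (C T m); [auto | exists x0; exact A | exact T_chain | exact Hm]).
  exists m; split; auto. apply le_anti. apply (proj1 Hm); auto. apply lef; auto.
Qed.
End BW.

Section Grp.
Variable G : profinite_group.
Local Infix "**" := (@pg_mul G) (at level 40, left associativity).
Local Notation iv := (@pg_inv G).
Local Notation one := (@pg_one G).

Lemma mulgV (x : G) : x ** iv x = one.
Proof.
  rewrite <- (pg_mul1g (x ** iv x)).
  rewrite <- (pg_mulVg (iv x)) at 1.
  rewrite <- pg_mulA. rewrite (pg_mulA (iv x) x (iv x)). rewrite pg_mulVg, pg_mul1g. apply pg_mulVg.
Qed.

Lemma mulg1 (x : G) : x ** one = x.
Proof. rewrite <- (pg_mulVg x), pg_mulA, mulgV, pg_mul1g. reflexivity. Qed.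

Lemma inv_uniq (a b : G) : a ** b = one -> a = iv b.
Proof. intro H. rewrite <- (mulg1 a), <- (mulgV b), pg_mulA, H, pg_mul1g. reflexivity. Qed.

Lemma invK (x : G) : iv (iv x) = x.
Proof. symmetry. apply inv_uniq. apply mulgV. Qed.

Lemma invM (x y : G) : iv (x ** y) = iv y ** iv x.
Proof. symmetry. apply inv_uniq. rewrite pg_mulA, <- (pg_mulA (iv y) (iv x) x), pg_mulVg, mulg1, pg_mulVg. reflexivity. Qed.

Lemma inv1 : iv one = one.
Proof. symmetry. apply inv_uniq. apply pg_mul1g. Qed.

Lemma mulgKV (x y : G) : (x ** iv y) ** y = x.
Proof. rewrite <- pg_mulA, pg_mulVg, mulg1. reflexivity. Qed.

Lemma mulgVK (x y : G) : (x ** y) ** iv y = x.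
Proof. rewrite <- pg_mulA, mulgV, mulg1. reflexivity. Qed.

Ltac gnorm := repeat first [ rewrite invM | rewrite invK | rewrite inv1 | rewrite pg_mulA
  | rewrite mulg1 | rewrite pg_mul1g | rewrite pg_mulVg | rewrite mulgV | rewrite mulgKV | rewrite mulgVK ].

Lemma test_gnorm (n l n' l' : G) : (n ** l) ** (n' ** l') = (n ** n') ** ((iv n' ** (l ** n')) ** l').
Proof. gnorm. reflexivity. Qed.

Definition nrm (H : set_of G) := forall g x, H x -> H (iv g ** (x ** g)).

Section SG.
Variable H : set_of G.
Hypothesis sg : is_subgroup H.
Lemma sg1 : H one. Proof. apply sg. Qed.
Lemma sgM x y : H x -> H y -> H (x ** y). Proof. apply sg. Qed.
Lemma sgV x : H x -> H (iv x). Proof. apply sg. Qed.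
Lemma sgV' x : H (iv x) -> H x. Proof. intro h. rewrite <- invK. apply sgV; auto. Qed.
Lemma sgMr a b : H b -> H (a ** b) -> H a.
Proof. intros hb hab. replace a with ((a ** b) ** iv b) by apply mulgVK. apply sgM; auto. apply sgV; auto. Qed.
Lemma sgMl a b : H a -> H (a ** b) -> H b.
Proof. intros ha hab. replace b with (iv a ** (a ** b)) by (gnorm; reflexivity). apply sgM; auto. apply sgV; auto. Qed.
Hypothesis nH : nrm H.
Lemma conj' g x : H x -> H (g ** (x ** iv g)).
Proof. intro h. generalize (nH (iv g) x h). rewrite invK. auto. Qed.
End SG.

Lemma cn_sg (H : set_of G) : closed_normal H -> is_subgroup H. Proof. intro h; apply h. Qed.
Lemma cn_nrm (H : set_of G) : closed_normal H -> nrm H. Proof. intro h; exact (proj2 (proj2 h)). Qed.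
Lemma cn_cl (H : set_of G) : closed_normal H -> is_closed H. Proof. intro h; exact (proj1 h). Qed.

Lemma sext (A B : set_of G) : (forall x, A x <-> B x) -> A = B.
Proof. intro h. apply functional_extensionality; intro x; apply propositional_extensionality; apply h. Qed.

Lemma open_local (V : set_of G) :
  (forall x, V x -> exists W, pg_open W /\ W x /\ (forall y, W y -> V y)) -> pg_open V.
Proof.
  intro h.
  assert (E : V = (fun x => exists i : {W : set_of G | pg_open W /\ (forall y, W y -> V y)}, proj1_sig i x)).
  { apply sext; intro x; split.
    - intro Hx. destruct (h x Hx) as [W [HW [Wx HWV]]]. exists (exist _ W (conj HW HWV)). exact Wx.
    - intros [[W [HW HWV]] Wx]. simpl in Wx. apply HWV; exact Wx. }
  rewrite E. apply pg_open_bigU. intro i. exact (proj1 (proj2_sig i)).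
Qed.

Lemma open_transl (U : set_of G) g : pg_open U -> pg_open (fun y => U (g ** y)).
Proof.
  intro HU. apply open_local. intros y Hy.
  destruct (pg_mul_cont HU Hy) as [V [W [HV [HW [Vg [Wy Hvw]]]]]].
  exists W. split; [exact HW|split; [exact Wy|]]. intros z Wz. exact (Hvw g z Vg Wz).
Qed.

Lemma closed_open_compl (A : set_of G) : is_closed A -> pg_open (fun x => ~ A x).
Proof. auto. Qed.


Lemma open_fin_inter (ls : list G) (U : G -> set_of G) :
  (forall g, pg_open (U g)) -> pg_open (fun x => forall g, In g ls -> U g x).
Proof.
  intro hU. induction ls as [|a ls IH].
  - apply open_local. intros x _. exists (fun _ => True).
    split; [apply pg_open_setT| split; [exact I|]]. intros y _ g [].
  - assert (E : (fun x => forall g, In g (a :: ls) -> U g x) =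
                (fun x => U a x /\ (forall g, In g ls -> U g x))).
    { apply sext; intro x; split.
      - intro h; split; [apply h; left; auto| intros g hg; apply h; right; auto].
      - intros [h1 h2] g [<-|hg]; auto. }
    rewrite E. apply pg_open_setI; auto.
Qed.

Section Main.
Variables K L : set_of G.
Hypothesis HJ : just_infinite G.
Hypothesis HK : closed_normal K.
Hypothesis HL : closed_normal L.
Hypothesis HLK : proper_subset L K.
Hypothesis Hch : ~ exists M, closed_normal M /\ proper_subset L M /\ proper_subset M K.

Definition good (A : set_of G) := closed_normal A /\ set_eq (setM A L) K.

Lemma good_sub A : good A -> subset A K.
Proof.
  intros [hA hE] a ha. apply hE. exists a, one. split; auto. split.
  apply sg1, cn_sg; auto. symmetry; apply mulg1.
Qed.

Lemma NL_sg N : is_subgroup N -> nrm N -> is_subgroup (setM N L) /\ nrm (setM N L).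
Proof.
  intros sN nN. pose proof (cn_sg _ HL) as sL. pose proof (cn_nrm _ HL) as nL.
  split; [split; [|split]|].
  - exists one, one. split; [apply sg1; auto|split; [apply sg1; auto|]]. symmetry; apply pg_mul1g.
  - intros x y [n [l [Hn [Hl ->]]]] [n' [l' [Hn' [Hl' ->]]]].
    exists (n ** n'), ((iv n' ** (l ** n')) ** l'). split. apply sgM; auto. split.
    apply sgM; auto. gnorm; reflexivity.
  - intros x [n [l [Hn [Hl ->]]]]. exists (iv n), (n ** (iv l ** iv n)).
    split; [apply sgV; auto|split; [apply conj'; auto; apply sgV; auto| gnorm; reflexivity]].
  - intros g x [n [l [Hn [Hl ->]]]]. exists (iv g ** (n ** g)), (iv g ** (l ** g)).
    split; [apply nN; auto|split; [apply nL; auto| gnorm; reflexivity]].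
Qed.

Lemma L_open : finite_index L -> pg_open L.
Proof.
  intros [ls hls]. pose proof (cn_sg _ HL) as sL.
  assert (E : L = (fun x => forall g, In g ls -> (fun g y => ~ L g -> ~ L (iv g ** y)) g x)).
  { apply sext; intro x; split.
    - intros hx g _ hg hgx. apply hg. apply (sgMr _ sL g (iv g ** x)); auto.
      replace (g ** (iv g ** x)) with x by (gnorm; reflexivity). auto.
    - intro h. destruct (hls x) as [g [hg hgx]]. destruct (classic (L g)) as [Lg|nLg].
      + replace x with (g ** (iv g ** x)) by (gnorm; reflexivity). apply sgM; auto.
      + exfalso; exact (h g hg nLg hgx). }
  rewrite E. apply open_fin_inter. intro g. apply open_local. intros x hx.
  destruct (classic (L g)) as [Lg|nLg].
  - exists (fun _ => True). split; [apply pg_open_setT|split; [exact I|]]. intros y _ n; contradiction.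
  - exists (fun y => ~ L (iv g ** y)). split; [apply (open_transl (fun y => ~ L y)); exact (cn_cl _ HL)|split; [apply hx; exact nLg|]].
    intros y hy _; exact hy.
Qed.

Lemma NL_closed N : closed_normal N -> is_closed (setM N L).
Proof.
  intro hN. pose proof (cn_sg _ HL) as sL. pose proof (cn_sg _ hN) as sN.
  destruct (classic (nontrivial L)) as [ntL|tL].
  - assert (Lo : pg_open L) by (apply L_open; apply (proj2 HJ); auto).
    unfold is_closed. apply open_local. intros x hx. exists (fun y => L (iv x ** y)).
    split; [apply (open_transl L); auto|split].
    + rewrite pg_mulVg. apply sg1; auto.
    + intros y hy [n [l [hn [hl e]]]]. subst y. apply hx. exists n, (l ** iv (iv x ** (n ** l))).
      split; auto. split. apply sgM; auto; apply sgV; auto. gnorm; reflexivity.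
  - assert (E : setM N L = N).
    { apply sext; intro x; split.
      - intros [n [l [hn [hl ->]]]]. assert (l = one) as el.
        { apply NNPP; intro hne; apply tL; exists l; auto. }
        subst; rewrite mulg1; auto.
      - intro hx; exists x, one; split; auto; split; [apply sg1; auto| symmetry; apply mulg1]. }
    rewrite E; apply cn_cl; auto.
Qed.

Lemma inter_cn (C : set_of G -> Prop) :
  (forall A, C A -> closed_normal A) -> closed_normal (fun x => forall A, C A -> A x).
Proof.
  intro hC. split; [|split; [split; [|split]|]].
  - unfold is_closed. apply open_local. intros x hx. cbv beta in hx.
    apply not_all_ex_not in hx. destruct hx as [A hA]. apply imply_to_and in hA.
    destruct hA as [CA nAx]. exists (fun y => ~ A y).
    split; [apply (cn_cl _ (hC A CA))|split; [exact nAx|]]. intros y hy h. apply hy. apply h. exact CA.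
  - intros A CA. apply sg1, cn_sg, hC; auto.
  - intros x y hx hy A CA. cbv beta in *. apply (sgM A (cn_sg _ (hC A CA))); [apply hx|apply hy]; auto.
  - intros x hx A CA; cbv beta in *; apply (sgV A (cn_sg _ (hC A CA))); apply hx; auto.
  - intros g x hx A CA. cbv beta in *. apply (cn_nrm _ (hC A CA)); apply hx; auto.
Qed.

Lemma setI_cn A : closed_normal A -> closed_normal (setI A L).
Proof.
  intro hA. pose proof (cn_sg _ HL) as sL. pose proof (cn_sg _ hA) as sA.
  split; [|split; [split; [|split]|]].
  - unfold is_closed. apply open_local. intros x hx. unfold setI in hx.
    destruct (classic (A x)) as [ax|nax].
    + exists (fun y => ~ L y). split; [apply (cn_cl _ HL)|split]. intro lx; apply hx; auto.
      intros y hy [_ h]; auto.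
    + exists (fun y => ~ A y). split; [apply (cn_cl _ hA)|split]. auto.
      intros y hy [h _]; auto.
  - split; apply sg1; auto.
  - intros x y [h1 h2] [h3 h4]; split; apply sgM; auto.
  - intros x [h1 h2]; split; apply sgV; auto.
  - intros g x [h1 h2]; split; [apply (cn_nrm _ hA)|apply (cn_nrm _ HL)]; auto.
Qed.

Lemma chain_inter (C : set_of G -> Prop) : (forall A, C A -> good A) -> (exists A, C A) ->
  (forall A B, C A -> C B -> subset A B \/ subset B A) ->
  forall k, K k -> exists d l, (forall A, C A -> A d) /\ L l /\ k = d ** l.
Proof.
  intros hP [A1 hA1] hch k hk. pose proof (cn_sg _ HL) as sL. apply NNPP; intro hno.
  pose (F := fun (i : option {A | C A}) => match i with
     | None => fun y => ~ L (iv k ** y) | Some s => fun y => ~ proj1_sig s y end).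
  assert (Fo : forall i, pg_open (F i)).
  { intros [[A hA]|]; simpl. apply (cn_cl _ (proj1 (hP A hA))).
    apply (open_transl (fun y => ~ L y)); apply (cn_cl _ HL). }
  assert (Fc : forall y, exists i, F i y).
  { intro y. destruct (classic (L (iv k ** y))) as [hy|hy].
    - destruct (classic (exists A, C A /\ ~ A y)) as [[A [hA nAy]]|hall].
      + exists (Some (exist _ A hA)); simpl; auto.
      + exfalso; apply hno. exists y, (iv y ** k). split.
        { intros A hA. apply NNPP; intro; apply hall; eauto. }
        split.
        { replace (iv y ** k) with (iv (iv k ** y)) by (gnorm; reflexivity). apply sgV; auto. }
        gnorm; reflexivity.
    - exists None; simpl; auto. }
  destruct (pg_compact Fo Fc) as [ls hls].
  assert (hmin : exists Am, C Am /\ forall s, In (Some s) ls -> subset Am (proj1_sig s)).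
  { clear hls. induction ls as [|[s|] ls IH].
    - exists A1; split; auto. intros s [].
    - destruct IH as [Am [hAm hsub]]. destruct s as [A hA]. destruct (hch Am A hAm hA) as [h|h].
      + exists Am; split; auto. intros s' [e|hs']. inversion e; subst; simpl; auto. auto.
      + exists A; split; auto. intros s' [e|hs']. inversion e; subst; simpl. intros x hx; exact hx.
        intros x hx; apply (hsub s' hs'), h; auto.
    - destruct IH as [Am [hAm hsub]]. exists Am; split; auto. intros s [e|hs']. discriminate. auto. }
  destruct hmin as [Am [hAm hsub]].
  destruct (proj2 ((proj2 (hP Am hAm)) k) hk) as [a [l [ha [hl e]]]].
  destruct (hls a) as [i [hi hFi]]. destruct i as [s|]; simpl in hFi.
  - apply hFi. apply (hsub s hi); auto.
  - apply hFi. subst k. replace (iv (a ** l) ** a) with (iv l) by (gnorm; reflexivity). apply sgV; auto.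
Qed.


Lemma factor_iso A : good A -> factor_isomorphic K L A (setI A L).
Proof.
  intros hgood. assert (hAK : subset A K) by (apply good_sub; auto).
  destruct hgood as [hA hE].
  pose proof (cn_sg _ hA) as sA. pose proof (cn_nrm _ hA) as nA.
  pose proof (cn_sg _ HL) as sL. pose proof (cn_nrm _ HL) as nL. pose proof (cn_sg _ HK) as sK.
  pose (f := fun x => epsilon (inhabits one) (fun a => K x -> A a /\ L (iv a ** x))).
  assert (hf : forall x, K x -> A (f x) /\ L (iv (f x) ** x)).
  { intros x hx.
    assert (EX : exists a, K x -> A a /\ L (iv a ** x)).
    { destruct (proj2 (hE x) hx) as [a [l [ha [hl e]]]]. exists a; intros _; split; auto.
      subst x. replace (iv a ** (a ** l)) with l by (gnorm; reflexivity); auto. }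
    exact (epsilon_spec (inhabits one) (fun a => K x -> A a /\ L (iv a ** x)) EX hx). }
  assert (hc : forall x, K x -> L (f x ** iv x)).
  { intros x hx. destruct (hf x hx) as [_ h].
    replace (f x ** iv x) with (f x ** (iv (iv (f x) ** x) ** iv (f x))) by (gnorm; reflexivity).
    apply conj'; auto. apply sgV; auto. }
  assert (hc' : forall x, K x -> L (x ** iv (f x))).
  { intros x hx. replace (x ** iv (f x)) with (iv (f x ** iv x)) by (gnorm; reflexivity).
    apply sgV; auto. }
  exists f. split; [|split; [|split]].
  - intros x hx; apply hf; auto.
  - intros x y hx hy. destruct (hf x hx) as [ax lx]; destruct (hf y hy) as [ay ly].
    assert (hw : L (f y ** (((iv (f x) ** x) ** iv (iv (f y) ** y)) ** iv (f y)))).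
    { apply conj'; auto. apply sgM; auto. apply sgV; auto. }
    replace (x ** iv y) with ((f x ** iv (f y)) ** (f y ** (((iv (f x) ** x) ** iv (iv (f y) ** y)) ** iv (f y)))) by (gnorm; reflexivity).
    unfold setI. split.
    + intro h. split. apply sgM; auto; apply sgV; auto. apply (sgMr _ sL _ _ hw h).
    + intros [_ h]. apply sgM; auto.
  - intros a ha. exists a. split; [apply hAK; auto|]. unfold setI. split.
    + apply sgM; auto. apply hf, hAK; auto. apply sgV; auto.
    + apply hc, hAK; auto.
  - intros x y hx hy. assert (hxy : K (x ** y)) by (apply sgM; auto).
    destruct (hf x hx) as [ax _]; destruct (hf y hy) as [ay _]; destruct (hf _ hxy) as [axy _].
    unfold setI. split.
    + apply sgM; auto. apply sgV; auto. apply sgM; auto.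
    + replace (f (x ** y) ** iv (f x ** f y)) with ((f (x ** y) ** iv (x ** y)) ** ((x ** ((y ** iv (f y)) ** iv x)) ** (x ** iv (f x)))) by (gnorm; reflexivity).
      apply sgM; auto. apply sgM; auto. apply conj'; auto.
Qed.

Lemma centr A : good A -> set_eq (centraliser_factor K L) (centraliser_factor A (setI A L)).
Proof.
  intros hgood. assert (hAK : subset A K) by (apply good_sub; auto).
  destruct hgood as [hA hE].
  pose proof (cn_sg _ hA) as sA. pose proof (cn_nrm _ hA) as nA.
  pose proof (cn_sg _ HL) as sL. pose proof (cn_nrm _ HL) as nL.
  intro g. unfold centraliser_factor, commg, setI. split.
  - intros h a ha. split.
    + replace (iv g ** (iv a ** (g ** a))) with ((iv g ** (iv a ** g)) ** a) by (gnorm; reflexivity).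
      apply sgM; auto. apply nA; apply sgV; auto.
    + apply h; apply hAK; auto.
  - intros h k hk. destruct (proj2 (hE k) hk) as [a [l [ha [hl e]]]]. subst k.
    replace (iv g ** (iv (a ** l) ** (g ** (a ** l)))) with ((iv g ** (iv l ** g)) ** ((iv g ** (iv a ** (g ** a))) ** l)) by (gnorm; reflexivity).
    apply sgM; auto. apply nL; apply sgV; auto. apply sgM; auto. apply (h a ha).
Qed.


Lemma main_result : exists A : set_of G,
    critical_pair A (setI A L) /\ set_eq (setM A L) K /\
    factor_isomorphic K L A (setI A L) /\
    set_eq (centraliser_factor K L) (centraliser_factor A (setI A L)).
Proof.
  pose proof (cn_sg _ HL) as sL. pose proof (cn_sg _ HK) as sK.
  pose (fs := fun A : set_of G => epsilon (inhabits A) (fun N => good A -> good N /\ subset N A /\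
      ((exists N', good N' /\ proper_subset N' A) -> proper_subset N A))).
  assert (hfs : forall A, good A -> good (fs A) /\ subset (fs A) A /\
      ((exists N', good N' /\ proper_subset N' A) -> proper_subset (fs A) A)).
  { intros A hA.
    assert (EX : exists N, good A -> good N /\ subset N A /\
      ((exists N', good N' /\ proper_subset N' A) -> proper_subset N A)).
    { destruct (classic (exists N', good N' /\ proper_subset N' A)) as [[N' [g' p']]|no].
      - exists N'. intros _; split; auto; split; [apply p'|auto].
      - exists A. intros _; split; auto; split; [intros x hx; exact hx| intro e; contradiction]. }
    exact (epsilon_spec (inhabits A) _ EX hA). }
  assert (goodK : good K).
  { split; auto. intro x; split.
    - intros [k [l [hk [hl e]]]]. subst x. apply sgM; auto. apply (proj1 HLK); auto.
    - intro hx. exists x, one. split; auto. split; [apply sg1; auto|symmetry; apply mulg1]. }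
  destruct (BW (set_of G) (fun A B => subset B A)
             (fun x y h => h)
             (fun x y z h1 h2 a ha => h1 a (h2 a ha))
             (fun x y h1 h2 => sext x y (fun a => conj (h2 a) (h1 a)))
             good fs K goodK (fun A hA => proj1 (hfs A hA)) (fun A hA => proj1 (proj2 (hfs A hA))))
    as [m [hm hfix]].
  { intros C hC hne hchain.
    exists (fun x => forall A, C A -> A x). split; [split|split].
    - apply inter_cn. intros A hA; apply (proj1 (hC A hA)).
    - intro x. split.
      + intros [d [l [hd [hl e]]]]. subst x. destruct hne as [A1 hA1].
        apply (proj2 (hC A1 hA1) (d ** l)). exists d, l. split; [apply hd; auto|auto].
      + intro hx.
        assert (CH : forall A B, C A -> C B -> subset A B \/ subset B A).
        { intros A B hA hB. destruct (hchain A B hA hB); auto. }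
        destruct (chain_inter C hC hne CH x hx) as [d [l [hd [hl e]]]].
        exists d, l; auto.
    - intros c hc x hx. apply hx; auto.
    - intros u hu x hx A hA. apply (hu A hA); auto. }
  assert (hnomin : ~ exists N', good N' /\ proper_subset N' m).
  { intro h. destruct (hfs m hm) as [_ [_ h3]]. pose proof (h3 h) as pr. rewrite hfix in pr.
    destruct pr as [_ [x [hx nx]]]; contradiction. }
  assert (hmK : subset m K) by (apply good_sub; auto).
  destruct hm as [hmc hmE].
  exists m. split; [|split; [auto|split; [apply factor_iso; split; auto|apply centr; split; auto]]].
  split; [auto|split; [apply setI_cn; auto|split]].
  - split. intros x [h _]; auto.
    destruct HLK as [_ [k [hk nk]]]. destruct (proj2 (hmE k) hk) as [a [l [ha [hl e]]]].
    exists a. split; auto. intros [_ la]. apply nk. subst k. apply sgM; auto.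
  - intros N hN hNm x hx. split; [apply (proj1 hNm); auto|].
    apply NNPP; intro nLx. apply hnomin. exists N. split; auto. split; auto.
    destruct (NL_sg N (cn_sg _ hN) (cn_nrm _ hN)) as [sNL nNL].
    assert (sub : subset (setM N L) K).
    { intros y [n [l [hn [hl e]]]]. subst y. apply sgM; auto. apply hmK, (proj1 hNm); auto.
      apply (proj1 HLK); auto. }
    assert (all : forall y, K y -> setM N L y).
    { intros y hy. apply NNPP; intro ny. apply Hch. exists (setM N L). split.
      - split; [apply NL_closed; auto|split; auto].
      - split.
        + split.
          * intros l hl. exists one, l. split; [apply sg1, cn_sg; auto|split; auto]. symmetry; apply pg_mul1g.
          * exists x. split; auto. exists x, one. split; auto. split; [apply sg1; auto|symmetry; apply mulg1].
        + split; auto. exists y; auto. }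
    intro y; split; auto.
Qed.

End Main.
End Grp.

Theorem lemma11 (G : profinite_group) (K L : set_of G) :
  just_infinite G ->
  closed_normal K -> closed_normal L -> proper_subset L K ->
  chief_factor K L ->
  exists A : set_of G,
    critical_pair A (setI A L) /\ set_eq (setM A L) K /\
    factor_isomorphic K L A (setI A L) /\
    set_eq (centraliser_factor K L) (centraliser_factor A (setI A L)).
Proof.
  intros HJ HK HL HLK [_ [_ [_ Hch]]].
  exact (main_result G K L HJ HK HL HLK Hch).
Qed.
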